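(* Assume $\mathcal M$ satisfies extensibility. Let $\lambda^*\in\mathbb R^A$ with $\lambda^*>0$ and $p^*\in\mathbb R^G_{\ge0}$ be such that $(\lambda^*,p^* )$ is proper. Then there exists an optimal solution $X^*$ of $LP(\lambda^* )$ such that $\mathrm{pay}_i(X^*,p^* )=m_i$ for every $i\in A$.
   Context: A market $\mathcal M$: finite agent set $A$, finite goods set $G$ (supply $1$ each), finite index set $C$; agent $i$ has real coefficients $a_{ijk}$, requirements $r_{ik}\ge0$, delays $d_{ij}\ge0$, budget $m_i>0$; $m(S)=\sum_{i\in S}m_i$. CC$(i)$: $\sum_ja_{ijk}x_{ij}\ge r_{ik}$ for all $k$, $x_{ij}\ge0$. An allocation $X\ge0$ is supply respecting if $\sum_ix_{ij}\le1$ for all $j$. For $S\subseteq A$, $X$ is jointly optimal for $S$ if it satisfies CC$(i)$ for all $i\in S$, is supply respecting, and minimizes $\sum_{i\in S}\sum_jd_{ij}x_{ij}$ among such allocations. Extensibility: for every $S\subset A$, every $X$ jointly optimal for $S$ and every $i\in A\setminus S$, there is $X'$ jointly optimal for $S\cup\{i\}$ with $\sum_jd_{i'j}x'_{i'j}=\sum_jd_{i'j}x_{i'j}$ for all $i'\in S$. $LP(\lambda)$: minimize $\sum_i\lambda_i\sum_jd_{ij}x_{ij}$ s.t. $\sum_ja_{ijk}x_{ij}\ge r_{ik}$ for all $(i,k)$, $\sum_ix_{ij}\le1$ for all $j$, $x\ge0$. $DLP(\lambda)$: maximize $\sum_{i,k}r_{ik}\alpha_{ik}-\sum_jp_j$ s.t.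 $\lambda_id_{ij}\ge\sum_ka_{ijk}\alpha_{ik}-p_j$ for all $(i,j)$, $\alpha,p\ge0$. $\mathrm{delay}_S(X)=\sum_{i\in S}\sum_jd_{ij}x_{ij}$, $\mathrm{pay}_S(X,p)=\sum_{i\in S}\sum_jp_jx_{ij}$, $\mathrm{pay}_i=\mathrm{pay}_{\{i\}}$. Given $(\lambda,p)$ and $S\subseteq A$: condition BB holds for $S$ if $\mathrm{pay}_S(X,p)=m(S)$ for every optimal solution $X$ of $LP(\lambda)$; condition SC holds for $S$ if for every $T\subseteq S$, letting $X$ be an optimal solution of $LP(\lambda)$ that maximizes $\mathrm{delay}_T$ among optimal solutions, $m(T)\ge\mathrm{pay}_T(X,p)$. The pair $(\lambda,p)$ is proper if there is $\alpha$ with $(\alpha,p)$ optimal for $DLP(\lambda)$, and BB and SC hold for every class $S_g$ of the partition of $A$ by equality of $\lambda_i$. *)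

(* Defs.v *)
From HB Require Import structures.
From mathcomp Require Import all_boot all_order all_algebra.
Set Implicit Arguments. Unset Strict Implicit. Unset Printing Implicit Defensive.
Import Order.TTheory GRing.Theory Num.Theory.
Local Open Scope ring_scope.

(* A market: agents A, goods G (supply 1 each), constraint indices C. *)
Record market (R : realFieldType) (A G C : finType) := Market {
  coef : A -> G -> C -> R;
  req  : A -> C -> R;
  dly  : A -> G -> R;
  bud  : A -> R
}.

Section Market.
Variables (R : realFieldType) (A G C : finType) (M : market R A G C).

Definition alloc := A -> G -> R.

Definition budS (S : {set A}) : R := \sum_(i in S) bud M i.

Definition CC (X : alloc) (i : A) : Prop :=
  (forall k : C, \sum_(j : G) coef M i j k * X i j >= req M i k) /\
  (forall j : G, 0 <= X i j).

Definition nonneg (X : alloc) : Prop := forall i j, 0 <= X i j.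

Definition supply_respecting (X : alloc) : Prop :=
  nonneg X /\ forall j : G, \sum_(i : A) X i j <= 1.

Definition delay_i (X : alloc) (i : A) : R := \sum_(j : G) dly M i j * X i j.
Definition delayS (S : {set A}) (X : alloc) : R := \sum_(i in S) delay_i X i.

Definition payS (S : {set A}) (X : alloc) (p : G -> R) : R :=
  \sum_(i in S) \sum_(j : G) p j * X i j.
Definition pay_i (i : A) (X : alloc) (p : G -> R) : R := payS [set i] X p.

Definition feasibleS (S : {set A}) (X : alloc) : Prop :=
  (forall i, i \in S -> CC X i) /\ supply_respecting X.

Definition jointly_optimal (S : {set A}) (X : alloc) : Prop :=
  feasibleS S X /\ forall Y, feasibleS S Y -> delayS S X <= delayS S Y.

Definition extensibility : Prop :=
  forall (S : {set A}) (X : alloc) (i : A),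
    S \proper [set: A] -> jointly_optimal S X -> i \notin S ->
    exists X', jointly_optimal (i |: S) X' /\
      forall i', i' \in S -> delay_i X' i' = delay_i X i'.

Definition LP_feasible (X : alloc) : Prop :=
  (forall i k, \sum_(j : G) coef M i j k * X i j >= req M i k) /\
  (forall j, \sum_(i : A) X i j <= 1) /\ nonneg X.

Definition LP_obj (lam : A -> R) (X : alloc) : R :=
  \sum_(i : A) lam i * \sum_(j : G) dly M i j * X i j.

Definition LP_optimal (lam : A -> R) (X : alloc) : Prop :=
  LP_feasible X /\ forall Y, LP_feasible Y -> LP_obj lam X <= LP_obj lam Y.

Definition DLP_feasible (lam : A -> R) (alpha : A -> C -> R) (p : G -> R) : Prop :=
  (forall i j, lam i * dly M i j >= \sum_(k : C) coef M i j k * alpha i k - p j) /\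
  (forall i k, 0 <= alpha i k) /\ (forall j, 0 <= p j).

Definition DLP_obj (alpha : A -> C -> R) (p : G -> R) : R :=
  \sum_(i : A) \sum_(k : C) req M i k * alpha i k - \sum_(j : G) p j.

Definition DLP_optimal (lam : A -> R) (alpha : A -> C -> R) (p : G -> R) : Prop :=
  DLP_feasible lam alpha p /\
  forall alpha' p', DLP_feasible lam alpha' p' -> DLP_obj alpha' p' <= DLP_obj alpha p.

Definition BB (lam : A -> R) (p : G -> R) (S : {set A}) : Prop :=
  forall X, LP_optimal lam X -> payS S X p = budS S.

Definition SC (lam : A -> R) (p : G -> R) (S : {set A}) : Prop :=
  forall T : {set A}, T \subset S ->
  forall X, LP_optimal lam X ->
    (forall Y, LP_optimal lam Y -> delayS T Y <= delayS T X) ->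
    payS T X p <= budS T.

Definition lam_class (lam : A -> R) (i : A) : {set A} := [set i' | lam i' == lam i].

Definition proper_pair (lam : A -> R) (p : G -> R) : Prop :=
  (exists alpha, DLP_optimal lam alpha p) /\
  forall i : A, BB lam p (lam_class lam i) /\ SC lam p (lam_class lam i).

End Market.

(* Main.v *)
Require Import Defs.
From HB Require Import structures.
From mathcomp Require Import all_boot all_order all_algebra.
From mathcomp Require Import ring lra.
From Stdlib Require Import Classical_Prop.
Import Order.TTheory GRing.Theory Num.Theory.
Local Open Scope ring_scope.

Module Aux.
Set Implicit Arguments. Unset Strict Implicit. Unset Printing Implicit Defensive.


Section Farkas.
Variable R : realFieldType.

Lemma sum_ind (T : finType) (t : T) (c : R) (f : T -> R) :
  \sum_k (if k == t then c else 0) * f k = c * f t.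
Proof.
rewrite (bigD1 t) //= eqxx big1 ?addr0 // => k /negbTE ->; by rewrite mul0r.
Qed.

Lemma interval_pick (T : finType) (P Q : pred T) (L U : T -> R) :
  (forall p q, P p -> Q q -> L p <= U q) ->
  exists t, (forall p, P p -> L p <= t) /\ (forall q, Q q -> t <= U q).
Proof.
move=> H; case: (pickP P) => [p0 Pp0 | nP].
  case: (arg_maxP L Pp0) => pm Ppm Hm.
  by exists (L pm); split => [p Pp | q Qq]; [exact: Hm | exact: H].
case: (pickP Q) => [q0 Qq0 | nQ].
  case: (arg_minP U Qq0) => qm Qqm Hm.
  by exists (U qm); split => [p | q Qq]; [rewrite nP | exact: Hm].
by exists 0; split => [p | q]; [rewrite nP | rewrite nQ].
Qed.

Variable V : finType.

Definition infeas (K : finType) (a : K -> V -> R) (b : K -> R) :=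
  forall x : V -> R, exists k, \sum_v a k v * x v < b k.
Definition cert (K : finType) (a : K -> V -> R) (b : K -> R) (y : K -> R) :=
  (forall k, 0 <= y k) /\ (forall v, \sum_k y k * a k v = 0) /\ 0 < \sum_k y k * b k.

Lemma farkas_base (K : finType) (a : K -> V -> R) b :
  (forall k v, a k v = 0) -> infeas a b -> exists y, cert a b y.
Proof.
move=> a0 /(_ (fun _ => 0)) [k hk].
exists (fun k' => if k' == k then 1 else 0); split; [|split].
- by move=> k'; case: eqP.
- by move=> v; apply: big1 => k' _; rewrite a0 mulr0.
- rewrite sum_ind mul1r; apply: le_lt_trans hk.
  by rewrite big1 // => v _; rewrite mulr0.
Qed.

Section Elim.
Variables (K : finType) (a : K -> V -> R) (b : K -> R) (v0 : V).

Definition Kp := (K + (K * K))%type.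
Definition mu (k' : Kp) (k0 : K) : R :=
  match k' with
  | inl k => if a k v0 == 0 then (if k0 == k then 1 else 0) else 0
  | inr (p, q) => if (0 < a p v0) && (a q v0 < 0) then
      (if k0 == p then - a q v0 else 0) + (if k0 == q then a p v0 else 0) else 0
  end.
Definition ap (k' : Kp) (v : V) := \sum_k0 mu k' k0 * a k0 v.
Definition bp (k' : Kp) := \sum_k0 mu k' k0 * b k0.

Lemma mu_ge0 k' k0 : 0 <= mu k' k0.
Proof.
case: k' => [k|[p q]] /=; first by case: ifP => // _; case: ifP.
case: ifP => // /andP[hp hq]; apply: addr_ge0; case: ifP => //.
  by rewrite oppr_ge0 ltW.
by rewrite ltW.
Qed.

Lemma mu_inl k (f : K -> R) :
  \sum_k0 mu (inl k) k0 * f k0 = if a k v0 == 0 then f k else 0.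
Proof.
rewrite /=; case: ifP => _; first by rewrite sum_ind mul1r.
by rewrite big1 // => k0 _; rewrite mul0r.
Qed.

Lemma mu_inr p q (f : K -> R) :
  \sum_k0 mu (inr (p, q)) k0 * f k0 =
  if (0 < a p v0) && (a q v0 < 0) then - a q v0 * f p + a p v0 * f q else 0.
Proof.
rewrite /=; case: ifP => _; last by rewrite big1 // => k0 _; rewrite mul0r.
by rewrite -(sum_ind p (- a q v0) f) -(sum_ind q (a p v0) f) -big_split /=; apply: eq_bigr => k0 _; rewrite mulrDl.
Qed.

Lemma ap_v0 k' : ap k' v0 = 0.
Proof.
rewrite /ap; case: k' => [k|[p q]]; rewrite ?mu_inl ?mu_inr.
  by case: eqP.
by case: ifP => // _; ring.
Qed.

Lemma ap_used k' v : ap k' v != 0 -> exists k, a k v != 0.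
Proof.
move=> H; case: (pickP (fun k => a k v != 0)) => [k hk|nk]; first by exists k.
move: H; rewrite /ap big1 ?eqxx // => k0 _.
by move: (nk k0) => /negbFE/eqP ->; rewrite mulr0.
Qed.

Lemma lift_cert y' : cert ap bp y' ->
  cert a b (fun k0 => \sum_k' y' k' * mu k' k0).
Proof.
have E : forall f : K -> R, \sum_k0 (\sum_k' y' k' * mu k' k0) * f k0
     = \sum_k' y' k' * \sum_k0 mu k' k0 * f k0.
  move=> f; rewrite (eq_bigr (fun k0 => \sum_k' y' k' * mu k' k0 * f k0)); last first.
    by move=> k0 _; rewrite mulr_suml.
  rewrite exchange_big /=; apply: eq_bigr => k' _; rewrite mulr_sumr.
  by apply: eq_bigr => k0 _; rewrite mulrA.
move=> [h1 [h2 h3]]; split; [|split].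
- by move=> k0; apply: sumr_ge0 => k' _; apply: mulr_ge0 => //; apply: mu_ge0.
- by move=> v; rewrite E; exact: h2.
- by rewrite E.
Qed.

Lemma feas_transfer (x' : V -> R) :
  (forall k', bp k' <= \sum_v ap k' v * x' v) ->
  exists x : V -> R, forall k, b k <= \sum_v a k v * x v.
Proof.
move=> H.
pose x0 := fun v => if v == v0 then 0 else x' v.
pose c := fun k => \sum_v a k v * x0 v.
have Hx0 : forall k', \sum_v ap k' v * x' v = \sum_k0 mu k' k0 * c k0.
  move=> k'; transitivity (\sum_v ap k' v * x0 v).
    apply: eq_bigr => v _; rewrite /x0; case: eqP => [->|//].
    by rewrite ap_v0 !mul0r.
  rewrite /ap (eq_bigr (fun v => \sum_k0 mu k' k0 * a k0 v * x0 v)); last first.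
    by move=> v _; rewrite mulr_suml.
  rewrite exchange_big /=; apply: eq_bigr => k0 _; rewrite /c mulr_sumr.
  by apply: eq_bigr => v _; rewrite mulrA.
have Hx : forall t k, \sum_v a k v * (fun v => if v == v0 then t else x0 v) v
      = a k v0 * t + c k.
  move=> t k; rewrite /c (bigD1 v0) //= eqxx [in RHS](bigD1 v0) //= /x0 eqxx mulr0 add0r.
  congr (_ + _); apply: eq_bigr => v /negbTE hv; by rewrite hv.
have hPQ : forall p q, 0 < a p v0 -> a q v0 < 0 ->
    (b p - c p) / a p v0 <= (b q - c q) / a q v0.
  move=> p q /= hp hq.
  have := H (inr (p, q)); rewrite Hx0 /bp !mu_inr hp hq /= => Hpq.
  set s := (b q - c q) / a q v0.
  have hs : s * a q v0 = b q - c q by rewrite /s divfK // ltr0_neq0.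
  rewrite ler_pdivrMr //.
  nra.
have [t [Ht1 Ht2]] := @interval_pick K (fun k => 0 < a k v0) (fun k => a k v0 < 0)
   (fun k => (b k - c k) / a k v0) (fun k => (b k - c k) / a k v0) hPQ.
exists (fun v => if v == v0 then t else x0 v) => k; rewrite Hx.
case: (ltrgtP (a k v0) 0) => hk.
- have := Ht2 k hk; set s := (b k - c k) / a k v0 => hst.
  have hs : s * a k v0 = b k - c k by rewrite /s divfK // ltr0_neq0.
  nra.
- have := Ht1 k hk; set s := (b k - c k) / a k v0 => hst.
  have hs : s * a k v0 = b k - c k by rewrite /s divfK // gt_eqF.
  nra.
- have := H (inl k); rewrite Hx0 /bp !mu_inl hk eqxx.
  by rewrite mul0r add0r.
Qed.

End Elim.

Lemma farkas_n n : forall (K : finType) (a : K -> V -> R) b,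
  (#|[set v | [exists k, a k v != 0%R]]| <= n)%N -> infeas a b -> exists y, cert a b y.
Proof.
elim: n => [|n IH] K a b hn hinf.
  move: hn; rewrite leqn0 cards_eq0 => /eqP H0; apply: (farkas_base _ hinf) => k v.
  apply/eqP; apply: contraTT isT => hk.
  have : v \in [set v | [exists k, a k v != 0]] by rewrite inE; apply/existsP; exists k.
  by rewrite H0 inE.
case: (set_0Vmem [set v | [exists k, a k v != 0]]) => [H0|[v0 hv0]].
  apply: (farkas_base _ hinf) => k v; apply/eqP; apply: contraTT isT => hk.
  have : v \in [set v | [exists k, a k v != 0]] by rewrite inE; apply/existsP; exists k.
  by rewrite H0 inE.
have [y' hy'] : exists y', cert (ap a v0) (bp a b v0) y'.
  apply: IH.
    apply: leq_trans (_ : (#|[set v | [exists k, a k v != 0%R]] :\ v0| <= n)%N).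
      apply: subset_leq_card; apply/subsetP => v; rewrite !inE => /existsP[k' hk'].
      have [k hk] := ap_used hk'.
      apply/andP; split; last by apply/existsP; exists k.
      by apply: contraNneq hk' => ->; rewrite ap_v0.
    by move: hn; rewrite (cardsD1 v0) hv0.
  move=> x'.
  case: (boolP [forall k', bp a b v0 k' <= \sum_v ap a v0 k' v * x' v]) => [/forallP hall|].
    have [x hx] := feas_transfer (fun k' => hall k').
    have [k hk] := hinf x.
    by move: (hx k); rewrite leNgt hk.
  rewrite negb_forall => /existsP[k' hk']; exists k'; by rewrite ltNge.
by exists (fun k0 => \sum_k' y' k' * mu a v0 k' k0); apply: lift_cert.
Qed.

Lemma farkas (K : finType) (a : K -> V -> R) b :
  infeas a b -> exists y, cert a b y.
Proof. exact: (farkas_n (leqnn _)). Qed.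

End Farkas.


Section Abel.
Variables (R : realFieldType) (A : finType).

Lemma sum_if (T : finType) (t : T) (g : T -> R) :
  \sum_k (if k == t then g k else 0) = g t.
Proof. rewrite (bigD1 t) //= eqxx big1 ?addr0 // => k /negbTE -> //. Qed.

Lemma abel_split (B : {set A}) (w a : A -> R) j0 : j0 \in B ->
  exists jm, [/\ jm \in B, forall i, i \in B -> w jm <= w i,
    (#|[set i in B | (w jm < w i)%R]| < #|B|)%N &
    \sum_(i in B) w i * a i = w jm * \sum_(i in B) a i +
       \sum_(i in [set i in B | w jm < w i]) (w i - w jm) * a i].
Proof.
move=> hj0; case: (arg_minP w hj0) => jm hjm Hm.
exists jm; split => //.
- apply: proper_card; rewrite properE; apply/andP; split.
    by apply/subsetP => i; rewrite inE => /andP[].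
  apply/subsetPn; exists jm => //; by rewrite inE ltxx andbF.
- rewrite (eq_bigr (fun i => w jm * a i + (w i - w jm) * a i)); last by move=> i _; ring.
  rewrite big_split /= -mulr_sumr; congr (_ + _).
  rewrite (big_setID [set i in B | w jm < w i]) /=.
  have -> : B :&: [set i in B | w jm < w i] = [set i in B | w jm < w i].
    by apply/setP => i; rewrite !inE; case: (i \in B).
  rewrite [X in _ + X]big1 ?addr0 //.
  move=> i; rewrite !inE => /andP[hn hi]; rewrite hi /= in hn.
  have -> : w i = w jm by apply/eqP; rewrite eq_le Hm // andbT leNgt.
  by rewrite subrr mul0r.
Qed.

Lemma level_eq (B : {set A}) (w a : A -> R) m j : j \in B -> m < w j ->
  \sum_(i in [set i in B | m < w i] | w j - m <= w i - m) a i =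
  \sum_(i in B | w j <= w i) a i.
Proof.
move=> hj hm; apply: eq_bigl => i; rewrite inE lerD2r.
case: (i \in B) => //=; case: (lerP (w j) (w i)) => h; rewrite ?andbF ?andbT //.
by apply: lt_le_trans h.
Qed.

Lemma abel_ge n : forall (B : {set A}) (w a : A -> R), (#|B| <= n)%N ->
  (forall i, i \in B -> 0 <= w i) ->
  (forall j, j \in B -> 0 <= \sum_(i in B | w j <= w i) a i) ->
  0 <= \sum_(i in B) w i * a i.
Proof.
elim: n => [|n IH] B w a hn hw hl.
  by move: hn; rewrite leqn0 cards_eq0 => /eqP ->; rewrite big_set0.
case: (set_0Vmem B) => [->|[j0 hj0]]; first by rewrite big_set0.
have [jm [hjm Hm hc ->]] := abel_split w a hj0.
apply: addr_ge0.
  apply: mulr_ge0; first exact: hw.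
  have := hl jm hjm; congr (0 <= _); apply: eq_bigl => i.
  by case hi: (i \in B) => //=; rewrite Hm.
apply: (IH _ (fun i => w i - w jm)).
- by rewrite -ltnS; apply: leq_trans hc hn.
- by move=> i; rewrite inE => /andP[_ h]; rewrite subr_ge0 ltW.
- move=> j hj; move: (hj); rewrite inE => /andP[hjB hjl].
  rewrite level_eq //; exact: hl.
Qed.

Lemma abel_eq n : forall (B : {set A}) (w a : A -> R), (#|B| <= n)%N ->
  (forall i, i \in B -> 0 < w i) ->
  (forall j, j \in B -> 0 <= \sum_(i in B | w j <= w i) a i) ->
  \sum_(i in B) w i * a i = 0 ->
  forall j, j \in B -> \sum_(i in B | w j <= w i) a i = 0.
Proof.
elim: n => [|n IH] B w a hn hw hl hs j hj.
  by move: hn; rewrite leqn0 cards_eq0 => /eqP hB; rewrite hB inE in hj.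
have [jm [hjm Hm hc hsplit]] := abel_split w a hj.
have hS : \sum_(i in B) a i = \sum_(i in B | w jm <= w i) a i.
  by apply: eq_bigl => i; case hi: (i \in B) => //=; rewrite Hm.
have h1 : 0 <= w jm * \sum_(i in B) a i.
  by apply: mulr_ge0; [apply: ltW; exact: hw | rewrite hS; exact: hl].
have h2 : 0 <= \sum_(i in [set i in B | w jm < w i]) (w i - w jm) * a i.
  apply: (abel_ge (leqnn _)).
  - by move=> i; rewrite inE => /andP[_ h]; rewrite subr_ge0 ltW.
  - move=> j' hj'; move: (hj'); rewrite inE => /andP[hjB hjl].
    rewrite level_eq //; exact: hl.
have [e1 e2] : w jm * \sum_(i in B) a i = 0 /\
   \sum_(i in [set i in B | w jm < w i]) (w i - w jm) * a i = 0.
  by rewrite hs in hsplit; split; lra.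
case: (ltrP (w jm) (w j)) => hjj.
  rewrite -(level_eq a hj hjj).
  apply: (IH _ (fun i => w i - w jm)) => //.
  - by rewrite -ltnS; apply: leq_trans hc hn.
  - by move=> i; rewrite inE => /andP[_ h]; rewrite subr_gt0.
  - move=> j' hj'; move: (hj'); rewrite inE => /andP[hjB hjl].
    rewrite level_eq //; exact: hl.
  - by rewrite inE hj.
have -> : \sum_(i in B | w j <= w i) a i = \sum_(i in B) a i.
  apply: eq_bigl => i; case hi: (i \in B) => //=.
  by apply: le_trans hjj (Hm _ hi).
move: e1 => /eqP; rewrite mulf_eq0 => /orP[/eqP h|/eqP //].
by move: (hw jm hjm); rewrite h ltxx.
Qed.

End Abel.


Section Mk.
Variables (R : realFieldType) (A G C : finType) (M : market R A G C).

Local Notation JO := (jointly_optimal M).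

Lemma JO_sub S S' (X X' : alloc R A G) : JO S X -> JO S' X' -> S \subset S' ->
  (forall i, i \in S -> delay_i M X' i = delay_i M X i) -> JO S X'.
Proof.
move=> [_ hX] [[hc hs] _] hsub hd; split.
  by split => // i hi; apply: hc; apply: (subsetP hsub).
move=> Y hY; apply: le_trans (hX Y hY); rewrite le_eqVlt; apply/orP; left.
by apply/eqP; apply: eq_bigr => i hi; apply: hd.
Qed.

Definition X0 : alloc R A G := fun _ _ => 0.

Lemma JO_set0 : JO set0 X0.
Proof.
split; first split.
- by move=> i; rewrite inE.
- split; first by move=> i j; rewrite /X0.
  by move=> j; rewrite big1 ?ler01.
by move=> Y _; rewrite /delayS !big_set0.
Qed.

Lemma chain_gen (hext : extensibility M) d (K : orderType d) (kap : A -> K) n :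
  forall T : {set A}, (#|T| <= n)%N -> exists X, JO T X /\
    forall c : K, [set i | (c <= kap i)%O] \subset T -> JO [set i | (c <= kap i)%O] X.
Proof.
elim: n => [|n IH] T hn.
  move: hn; rewrite leqn0 cards_eq0 => /eqP ->; exists X0; split; first exact: JO_set0.
  by move=> c; rewrite subset0 => /eqP ->; exact: JO_set0.
case: (set_0Vmem T) => [->|[i0 hi0]].
  exists X0; split; first exact: JO_set0.
  by move=> c; rewrite subset0 => /eqP ->; exact: JO_set0.
case: (arg_minP kap hi0) => i hi0' Hm.
have hi : i \in T := hi0'.
have hTn : (#|T :\ i| <= n)%N by move: hn; rewrite (cardsD1 i) hi.
have [X [hX hXc]] := IH (T :\ i) hTn.
have hprop : T :\ i \proper [set: A].
  rewrite properT; apply/negP => /eqP h.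
  by have := in_setT i; rewrite -h !inE eqxx.
have hiT : i \notin T :\ i by rewrite !inE eqxx.
have [X' [hX' hd]] := hext (T :\ i) X i hprop hX hiT.
rewrite setD1K // in hX'.
exists X'; split => // c hsub.
case: (boolP (c <= kap i)%O) => hci.
  have -> : [set i | (c <= kap i)%O] = T; last by [].
  apply/eqP; rewrite eqEsubset hsub /=; apply/subsetP => j hj.
  by rewrite inE; apply: le_trans hci (Hm j hj).
have hsub' : [set i | (c <= kap i)%O] \subset T :\ i.
  apply/subsetP => j hj; rewrite !inE (subsetP hsub _ hj) andbT.
  by apply: contraNneq hci => <-; move: hj; rewrite inE.
apply: (JO_sub (hXc c hsub') hX' hsub) => j hj; apply: hd; exact: (subsetP hsub' _ hj).
Qed.

Lemma chain (hext : extensibility M) d (K : orderType d) (kap : A -> K) :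
  exists X, JO setT X /\ forall c : K, JO [set i | (c <= kap i)%O] X.
Proof.
have [X [h1 h2]] := chain_gen hext kap (leqnn #|[set: A]|).
by exists X; split => // c; apply: h2; apply: subsetT.
Qed.

Lemma LP_feasS S (X : alloc R A G) : LP_feasible M X -> feasibleS M S X.
Proof. by move=> [h1 [h2 h3]]; split => // i _; split => // j; apply: h3. Qed.

Lemma JO_LP (X : alloc R A G) : JO setT X -> LP_feasible M X.
Proof.
move=> [[hc [hn hs]] _]; split; last by split.
by move=> i k; have [] := hc i (in_setT i).
Qed.

Lemma delayS_lev (w : A -> R) (X : alloc R A G) j :
  \sum_(i in setT | w j <= w i) delay_i M X i = delayS M [set i | w j <= w i] X.
Proof. by apply: eq_bigl => i; rewrite !inE. Qed.

Lemma lev_ge0 (w : A -> R) (X Y : alloc R A G) j :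
  JO [set i | w j <= w i] X -> LP_feasible M Y ->
  0 <= \sum_(i in setT | w j <= w i) (delay_i M Y i - delay_i M X i).
Proof.
move=> [_ hX] hY; rewrite sumrB !delayS_lev subr_ge0.
by apply: hX; apply: LP_feasS.
Qed.

Lemma LP_obj_diff (lam : A -> R) (X Y : alloc R A G) :
  LP_obj M lam Y - LP_obj M lam X =
  \sum_(i in setT) lam i * (delay_i M Y i - delay_i M X i).
Proof.
rewrite /LP_obj -sumrB; apply: eq_big => [i|i _]; [by rewrite inE | rewrite /delay_i; ring].
Qed.

Lemma opt_chain (lam : A -> R) (X : alloc R A G) :
  (forall i, 0 <= lam i) -> LP_feasible M X ->
  (forall j, JO [set i | lam j <= lam i] X) -> LP_optimal M lam X.
Proof.
move=> hl hX hc; split => // Y hY; rewrite -subr_ge0 LP_obj_diff.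
apply: (abel_ge (leqnn _)) => [i _|j _]; first exact: hl.
exact: lev_ge0.
Qed.

Lemma opt_lev_eq (lam : A -> R) (X Y : alloc R A G) :
  (forall i, 0 < lam i) -> LP_optimal M lam X -> LP_optimal M lam Y ->
  (forall j, JO [set i | lam j <= lam i] X) ->
  forall j, delayS M [set i | lam j <= lam i] Y = delayS M [set i | lam j <= lam i] X.
Proof.
move=> hl [hX oX] [hY oY] hc j.
have := @abel_eq R A _ setT lam (fun i => delay_i M Y i - delay_i M X i) (leqnn _).
move=> H; apply/eqP; rewrite -subr_eq0 -!delayS_lev -sumrB; apply/eqP.
apply: H => //.
- by move=> j' _; exact: lev_ge0.
- rewrite -LP_obj_diff; apply/eqP; rewrite subr_eq0 eq_le oX // oY //.
Qed.

End Mk.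


Section Dual.
Variables (R : realFieldType) (A G C : finType) (M : market R A G C).

Lemma gap (lam : A -> R) (X : alloc R A G) (al : A -> C -> R) (p : G -> R) :
 LP_obj M lam X - DLP_obj M al p =
 \sum_i \sum_j X i j * (lam i * dly M i j - \sum_k coef M i j k * al i k + p j)
 + \sum_i \sum_k al i k * (\sum_j coef M i j k * X i j - req M i k)
 + \sum_j p j * (1 - \sum_i X i j).
Proof.
have e1 : \sum_i \sum_j X i j * (lam i * dly M i j - \sum_k coef M i j k * al i k + p j)
  = \sum_i \sum_j X i j * (lam i * dly M i j) - \sum_i \sum_j \sum_k coef M i j k * al i k * X i j
    + \sum_i \sum_j p j * X i j.
  rewrite -sumrB -big_split /=; apply: eq_bigr => i _.
  rewrite -sumrB -big_split /=; apply: eq_bigr => j _.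
  rewrite -mulr_suml; ring.
have e2 : \sum_i \sum_k al i k * (\sum_j coef M i j k * X i j - req M i k)
  = \sum_i \sum_j \sum_k coef M i j k * al i k * X i j - \sum_i \sum_k req M i k * al i k.
  rewrite -sumrB; apply: eq_bigr => i _.
  rewrite exchange_big /= -sumrB; apply: eq_bigr => k _.
  rewrite mulrBr mulr_sumr; congr (_ - _); last by rewrite mulrC.
  by apply: eq_bigr => j _; ring.
have e3 : \sum_j p j * (1 - \sum_i X i j) = \sum_j p j - \sum_i \sum_j p j * X i j.
  rewrite exchange_big /= -sumrB; apply: eq_bigr => j _.
  by rewrite mulrBr mulr1 mulr_sumr.
have e4 : LP_obj M lam X = \sum_i \sum_j X i j * (lam i * dly M i j).
  rewrite /LP_obj; apply: eq_bigr => i _; rewrite mulr_sumr.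
  by apply: eq_bigr => j _; ring.
rewrite e1 e2 e3 e4 /DLP_obj; ring.
Qed.

Lemma gap_blocks (lam : A -> R) (X : alloc R A G) (al : A -> C -> R) (p : G -> R) :
  LP_feasible M X -> DLP_feasible M lam al p ->
  [/\ 0 <= \sum_i \sum_j X i j * (lam i * dly M i j - \sum_k coef M i j k * al i k + p j),
      0 <= \sum_i \sum_k al i k * (\sum_j coef M i j k * X i j - req M i k) &
      0 <= \sum_j p j * (1 - \sum_i X i j)].
Proof.
move=> [hr [hs hn]] [hd [ha hp]]; split.
- apply: sumr_ge0 => i _; apply: sumr_ge0 => j _; apply: mulr_ge0 => //.
  by have := hd i j; lra.
- apply: sumr_ge0 => i _; apply: sumr_ge0 => k _; apply: mulr_ge0 => //.
  by rewrite subr_ge0.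
- by apply: sumr_ge0 => j _; apply: mulr_ge0 => //; rewrite subr_ge0.
Qed.

Lemma weak (lam : A -> R) (X : alloc R A G) (al : A -> C -> R) (p : G -> R) :
  LP_feasible M X -> DLP_feasible M lam al p -> DLP_obj M al p <= LP_obj M lam X.
Proof.
move=> hX hD; have [h1 h2 h3] := gap_blocks hX hD.
by rewrite -subr_ge0 gap; apply: addr_ge0 => //; apply: addr_ge0.
Qed.

Lemma cs (lam : A -> R) (X : alloc R A G) (al : A -> C -> R) (p : G -> R) :
  LP_feasible M X -> DLP_feasible M lam al p -> LP_obj M lam X = DLP_obj M al p ->
  forall i, lam i * delay_i M X i = \sum_k al i k * req M i k - pay_i i X p.
Proof.
move=> hX hD he i.
have [h1 h2 h3] := gap_blocks hX hD.
have := gap lam X al p; rewrite he subrr => hz.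
have [z1 z2] : \sum_i \sum_j X i j * (lam i * dly M i j - \sum_k coef M i j k * al i k + p j) = 0
  /\ \sum_i \sum_k al i k * (\sum_j coef M i j k * X i j - req M i k) = 0 by split; lra.
move: hX hD => [hr [hs hn]] [hd [ha hp]].
have t1 : forall j, X i j * (lam i * dly M i j - \sum_k coef M i j k * al i k + p j) = 0.
  have hi : \sum_j X i j * (lam i * dly M i j - \sum_k coef M i j k * al i k + p j) = 0.
    apply: (psumr_eq0P _ z1) => // i' _; apply: sumr_ge0 => j _; apply: mulr_ge0 => //.
    by have := hd i' j; lra.
  move=> j; apply: (psumr_eq0P _ hi) => // j' _; apply: mulr_ge0 => //.
  by have := hd i j'; lra.
have t2 : forall k, al i k * (\sum_j coef M i j k * X i j - req M i k) = 0.
  have hi : \sum_k al i k * (\sum_j coef M i j k * X i j - req M i k) = 0.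
    apply: (psumr_eq0P _ z2) => // i' _; apply: sumr_ge0 => k _; apply: mulr_ge0 => //.
    by rewrite subr_ge0.
  move=> k; apply: (psumr_eq0P _ hi) => // k' _; apply: mulr_ge0 => //.
  by rewrite subr_ge0.
have -> : pay_i i X p = \sum_j p j * X i j by rewrite /pay_i /payS big_set1.
transitivity (\sum_j (\sum_k coef M i j k * al i k * X i j - p j * X i j)).
  rewrite /delay_i mulr_sumr; apply: eq_bigr => j _.
  have := t1 j; rewrite -mulr_suml => h; lra.
rewrite sumrB; congr (_ - _).
rewrite exchange_big /=; apply: eq_bigr => k _.
transitivity (al i k * \sum_j coef M i j k * X i j).
  by rewrite mulr_sumr; apply: eq_bigr => j _; ring.
by have := t2 k; rewrite mulrBr; lra.
Qed.

Lemma class_ge0 (lam : A -> R) (P : {set A}) (f : A -> R) :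
  (forall i0, 0 <= \sum_(i in P :&: lam_class lam i0) f i) -> 0 <= \sum_(i in P) f i.
Proof.
move=> H.
rewrite (partition_big (lam_class lam) predT) //=.
apply: sumr_ge0 => Cl _.
case: (pickP (fun i => lam_class lam i == Cl)) => [i0 /eqP <-|none].
  have := H i0; congr (0 <= _); apply: eq_bigl => i; rewrite !inE.
  case: (i \in P) => //=; apply/eqP/eqP => [h|h].
    by apply/setP => x; rewrite !inE h.
  have : i \in lam_class lam i by rewrite inE.
  by rewrite h inE => /eqP.
rewrite big1 // => i /andP[_ hi]; by rewrite none in hi.
Qed.

Lemma class_eq (lam : A -> R) (P : {set A}) (f g : A -> R) :
  (forall i0, \sum_(i in P :&: lam_class lam i0) f i = \sum_(i in P :&: lam_class lam i0) g i) ->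
  \sum_(i in P) f i = \sum_(i in P) g i.
Proof.
move=> H; apply/eqP; rewrite eq_le; apply/andP; split;
  rewrite -subr_ge0 -sumrB; apply: class_ge0 => i0; rewrite sumrB; have := H i0; lra.
Qed.

End Dual.


Section PF.
Variables (R : realFieldType) (A G C : finType) (M : market R A G C).
Variables (E : finType) (c : E -> A -> R) (th : E -> R).

Lemma sum_pair (I J : finType) (F : I * J -> R) : \sum_v F v = \sum_i \sum_j F (i, j).
Proof. by rewrite pair_big /=; apply: eq_bigr => -[]. Qed.

Lemma sum_if_r (T : finType) (t : T) (g : T -> R) :
  \sum_k (if t == k then g k else 0) = g t.
Proof. rewrite (bigD1 t) //= eqxx big1 ?addr0 // => k hk; by rewrite eq_sym (negbTE hk). Qed.

Definition Vt := (A * G)%type.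
Definition Kt := (((A * G) + (A * C)) + (G + E))%type.
Definition amat (k : Kt) (v : Vt) : R :=
 match k with
 | inl (inl ij) => if ij == v then 1 else 0
 | inl (inr ik) => if ik.1 == v.1 then coef M v.1 v.2 ik.2 else 0
 | inr (inl j) => if j == v.2 then -1 else 0
 | inr (inr e) => - (c e v.1 * dly M v.1 v.2)
 end.
Definition bvec (k : Kt) : R :=
 match k with
 | inl (inl _) => 0
 | inl (inr ik) => req M ik.1 ik.2
 | inr (inl _) => -1
 | inr (inr e) => - th e
 end.

Lemma Ax1 (x : Vt -> R) ij : \sum_v amat (inl (inl ij)) v * x v = x ij.
Proof.
rewrite /= (eq_bigr (fun v => if ij == v then x v else 0)) ?sum_if_r //.
by move=> v _; case: eqP => _; rewrite ?mul1r ?mul0r.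
Qed.

Lemma Ax2 (x : Vt -> R) i k :
  \sum_v amat (inl (inr (i, k))) v * x v = \sum_j coef M i j k * x (i, j).
Proof.
rewrite sum_pair /= (eq_bigr (fun i' => if i == i' then \sum_j coef M i' j k * x (i', j) else 0)).
  by rewrite sum_if_r.
move=> i' _; case: eqP => _ //; by rewrite big1 // => j _; rewrite mul0r.
Qed.

Lemma Ax3 (x : Vt -> R) j : \sum_v amat (inr (inl j)) v * x v = - \sum_i x (i, j).
Proof.
rewrite sum_pair /= -sumrN; apply: eq_bigr => i _.
rewrite (eq_bigr (fun j' => if j == j' then - x (i, j') else 0)) ?sum_if_r //.
by move=> j' _; case: eqP => _; rewrite ?mulN1r ?mul0r.
Qed.

Lemma Ax4 (x : Vt -> R) e :
  \sum_v amat (inr (inr e)) v * x v = - \sum_i c e i * \sum_j dly M i j * x (i, j).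
Proof.
rewrite sum_pair /= -sumrN; apply: eq_bigr => i _.
rewrite mulr_sumr -sumrN; apply: eq_bigr => j _; ring.
Qed.

Lemma primal_farkas :
  (forall X, LP_feasible M X -> exists e, th e < \sum_i c e i * delay_i M X i) ->
  exists w : E -> R, (forall e, 0 <= w e) /\ exists al pp,
    DLP_feasible M (fun i => \sum_e w e * c e i) al pp /\
    \sum_e w e * th e < DLP_obj M al pp.
Proof.
move=> H.
have hinf : infeas amat bvec.
  move=> x; pose X : alloc R A G := fun i j => x (i, j).
  case: (boolP [forall k, bvec k <= \sum_v amat k v * x v]) => [/forallP hall|]; last first.
    by rewrite negb_forall => /existsP[k hk]; exists k; rewrite ltNge.
  exfalso.
  have hX : LP_feasible M X.
    split; [|split].
    - by move=> i k; have := hall (inl (inr (i, k))); rewrite Ax2.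
    - by move=> j; have := hall (inr (inl j)); rewrite Ax3 /= lerN2.
    - by move=> i j; have := hall (inl (inl (i, j))); rewrite Ax1.
  have [e he] := H X hX.
  have := hall (inr (inr e)); rewrite Ax4 /= lerN2.
  by rewrite /delay_i /X; move=> h; move: he; rewrite ltNge h.
have [y [hy0 [hya hyb]]] := farkas hinf.
pose w := fun e => y (inr (inr e)).
pose al := fun i k => y (inl (inr (i, k))).
pose pp := fun j => y (inr (inl j)).
have col : forall i j, y (inl (inl (i, j))) + \sum_k coef M i j k * al i k - pp j
     - (\sum_e w e * c e i) * dly M i j = 0.
  move=> i j.
  have s1 : \sum_ij y (inl (inl ij)) * (if ij == (i, j) then 1 else 0) = y (inl (inl (i, j))).
    rewrite (eq_bigr (fun ij => if ij == (i, j) then y (inl (inl ij)) else 0)) ?sum_if //.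
    by move=> ij _; case: eqP => _; rewrite ?mulr1 ?mulr0.
  have s2 : \sum_ik y (inl (inr ik)) * (if ik.1 == i then coef M i j ik.2 else 0)
      = \sum_k coef M i j k * al i k.
    rewrite sum_pair (eq_bigr (fun i' => if i' == i then \sum_k coef M i j k * al i k else 0)).
      by rewrite sum_if.
    move=> i' _ /=; case: eqP => [->|_]; first by apply: eq_bigr => k _; rewrite /al mulrC.
    by rewrite big1 // => k _; rewrite mulr0.
  have s3 : \sum_j' y (inr (inl j')) * (if j' == j then -1 else 0) = - pp j.
    rewrite -sum_if -sumrN; apply: eq_bigr => j' _.
    by case: eqP => [->|_]; rewrite ?mulrN1 ?mulr0 ?oppr0.
  have s4 : \sum_e y (inr (inr e)) * - (c e i * dly M i j) = - ((\sum_e w e * c e i) * dly M i j).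
    rewrite mulr_suml -sumrN; apply: eq_bigr => e _; rewrite /w; ring.
  have := hya (i, j); rewrite !big_sumType /= s1 s2 s3 s4 => h; lra.
exists w; split; first by move=> e; apply: hy0.
exists al, pp; split.
  split; [|split].
  - move=> i j; have := col i j; have := hy0 (inl (inl (i, j))); lra.
  - by move=> i k; apply: hy0.
  - by move=> j; apply: hy0.
move: hyb; rewrite !big_sumType /= big1 ?add0r; last by move=> ij _; rewrite mulr0.
rewrite sum_pair /DLP_obj => h.
have e1 : \sum_i \sum_j y (inl (inr (i, j))) * req M (i, j).1 (i, j).2 =
          \sum_i \sum_k req M i k * al i k.
  by apply: eq_bigr => i _; apply: eq_bigr => k _; rewrite mulrC.
have e2 : \sum_i y (inr (inl i)) * -1 = - \sum_j pp j.
  by rewrite -sumrN; apply: eq_bigr => j _; rewrite mulrN1.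
have e3 : \sum_i y (inr (inr i)) * - th i = - \sum_e w e * th e.
  by rewrite -sumrN; apply: eq_bigr => e _; rewrite mulrN.
rewrite e1 e2 e3 in h; lra.
Qed.

End PF.


Section Main.
Variables (R : realFieldType) (A G C : finType) (M : market R A G C).

Lemma sum_unit (F : unit -> R) : \sum_e F e = F tt.
Proof. by rewrite (bigD1 tt) //= big1 ?addr0 // => -[]; rewrite eqxx. Qed.

Lemma DLP_scale (lam : A -> R) s (a : A -> C -> R) (q : G -> R) : 0 < s ->
  DLP_feasible M (fun i => s * lam i) a q ->
  DLP_feasible M lam (fun i k => a i k / s) (fun j => q j / s) /\
  DLP_obj M (fun i k => a i k / s) (fun j => q j / s) = DLP_obj M a q / s.
Proof.
move=> hs [hd [ha hq]]; split; [split; [|split]|].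
- move=> i j; have := hd i j.
  have -> : \sum_k coef M i j k * (a i k / s) - q j / s =
            (\sum_k coef M i j k * a i k - q j) / s.
    by rewrite mulrBl mulr_suml; congr (_ - _); apply: eq_bigr => k _; rewrite mulrA.
  move=> h; rewrite ler_pdivrMr //. nra.
- by move=> i k; apply: divr_ge0 => //; apply: ltW.
- by move=> j; apply: divr_ge0 => //; apply: ltW.
rewrite /DLP_obj mulrBl mulr_suml mulr_suml; congr (_ - _).
  apply: eq_bigr => i _; rewrite mulr_suml; apply: eq_bigr => k _; by rewrite mulrA.
Qed.


Lemma DLP_ext (l1 l2 : A -> R) a q : (forall i, l1 i = l2 i) ->
  DLP_feasible M l1 a q -> DLP_feasible M l2 a q.
Proof. by move=> e [h1 h2]; split => // i j; rewrite -e. Qed.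

Lemma pay_i_E (X : alloc R A G) (p : G -> R) i : pay_i i X p = \sum_j p j * X i j.
Proof. by rewrite /pay_i /payS big_set1. Qed.

Lemma payS_E (S : {set A}) (X : alloc R A G) (p : G -> R) :
  payS S X p = \sum_(i in S) pay_i i X p.
Proof. by apply: eq_bigr => i _; rewrite pay_i_E. Qed.

Lemma split_set (S T : {set A}) (f : A -> R) :
  \sum_(i in S) f i = \sum_(i in S :&: T) f i + \sum_(i in S :\: T) f i.
Proof. by rewrite (big_setID T). Qed.

Theorem main
  (hr : forall i k, 0 <= req M i k)
  (hd : forall i j, 0 <= dly M i j)
  (hm : forall i, 0 < bud M i)
  (hext : extensibility M)
  (lam : A -> R) (p : G -> R)
  (hlam : forall i, 0 < lam i)
  (hp : forall j, 0 <= p j)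
  (hprop : proper_pair M lam p) :
  exists X : alloc R A G, LP_optimal M lam X /\ forall i : A, pay_i i X p = bud M i.
Proof.
move: hprop => [[al [hal halo]] hcls].
have hlam0 : forall i, 0 <= lam i by move=> i; apply: ltW.
have [X1 [hX1T hX1c]] := chain hext lam.
have oX1 : LP_optimal M lam X1.
  by apply: (opt_chain hlam0 (JO_LP hX1T)) => j; exact: hX1c.
have sd : LP_obj M lam X1 = DLP_obj M al p.
  have hw1 := weak (proj1 oX1) hal.
  apply/eqP; rewrite eq_le hw1 andbT leNgt; apply/negP => hlt.
  have hF : forall X, LP_feasible M X -> exists e : unit,
      DLP_obj M al p < \sum_i lam i * delay_i M X i.
    move=> X hX; exists tt; apply: lt_le_trans hlt _; by case: oX1 => _ /(_ X hX).
  have [w [hw [al' [pp' [hf hlt']]]]] :=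
    @primal_farkas R A G C M unit (fun _ i => lam i) (fun _ => DLP_obj M al p) hF.
  move: hlt'; rewrite sum_unit => hlt'.
  have {}hf := DLP_ext (fun i => sum_unit (fun e => w e * lam i)) hf.
  case: (ltrgtP (w tt) 0) => hw0; first by have := hw tt; rewrite leNgt hw0.
    have [hf' he] := DLP_scale hw0 hf.
    have := halo _ _ hf'; rewrite he ler_pdivrMr // => h.
    move: hlt'; rewrite mulrC => h2; move: h; rewrite leNgt h2 //.
  have := weak (proj1 oX1) hf; rewrite hw0.
  have -> : LP_obj M (fun i => 0 * lam i) X1 = 0.
    by rewrite /LP_obj big1 // => i _; rewrite mul0r mul0r.
  move: hlt'; rewrite hw0 mul0r => h1 h2; move: h1; by rewrite ltNge h2.
pose beta i := \sum_k al i k * req M i k.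
have csX : forall X, LP_optimal M lam X -> forall i, lam i * delay_i M X i = beta i - pay_i i X p.
  move=> X [hX oX]; apply: (cs hX hal).
  rewrite -sd; apply/eqP; rewrite eq_le (oX X1 (proj1 oX1)) /=.
  exact: (proj2 oX1 X hX).
have eT : forall f : A -> R, \sum_(i in [set: A]) f i = \sum_i f i.
  by move=> f; apply: eq_bigl => i; rewrite inE.
have sumpay : forall X, LP_optimal M lam X -> \sum_i pay_i i X p = \sum_i bud M i.
  move=> X oX; rewrite -!eT.
  apply: (@class_eq R A lam setT (fun i => pay_i i X p) (bud M)) => i0.
  rewrite setTI; have [hB _] := hcls i0; have := hB X oX.
  by rewrite payS_E /budS.
pose del i := (beta i - bud M i) / lam i.
have core : forall P : {set A}, exists Y, feasibleS M P Y /\ delayS M P Y <= \sum_(i in P) del i.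
  move=> P.
  have [Xc [hXcT hXcc]] := chain hext (fun i => ((lam i, i \in P) : (R *l bool)%type)).
  have hlev : forall j, jointly_optimal M [set i | lam j <= lam i] Xc.
    move=> j.
    have -> : [set i | lam j <= lam i] =
              [set i | (((lam j, false) : (R *l bool)%type) <= ((lam i, i \in P) : (R *l bool)%type))%O].
      by apply/setP => i; rewrite !inE lexi_pair; case: (i \in P); rewrite /= ?implybT ?andbT.
    exact: hXcc.
  have oXc : LP_optimal M lam Xc := opt_chain hlam0 (JO_LP hXcT) hlev.
  exists Xc; split; first exact: LP_feasS (proj1 oXc).
  rewrite -subr_ge0 /delayS -sumrB; apply: (@class_ge0 R A lam) => i0.
  set cl := lam_class lam i0.
  set L := [set i | lam i0 <= lam i].
  set Q := [set i | (((lam i0, true) : (R *l bool)%type) <= ((lam i, i \in P) : (R *l bool)%type))%O].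
  set T := cl :\: P.
  have hQ : jointly_optimal M Q Xc := hXcc (lam i0, true).
  have hLQ : forall Y, delayS M T Y = delayS M L Y - delayS M Q Y.
    move=> Y.
    have e1 : L :&: Q = Q.
      apply/setP => i; rewrite !inE !lexi_pair.
      by case: (lam i0 <= lam i).
    have e2 : L :\: Q = T.
      apply/setP => i; rewrite !inE !lexi_pair.
      by case: (ltrgtP (lam i) (lam i0)); case: (i \in P).
    by rewrite /delayS (split_set L Q) e1 e2 ; lra.
  have hmax : forall Y, LP_optimal M lam Y -> delayS M T Y <= delayS M T Xc.
    move=> Y oY; rewrite !hLQ (opt_lev_eq hlam oXc oY hlev i0) lerD2l lerN2.
    by apply: (proj2 hQ); apply: LP_feasS (proj1 oY).
  have [hB hS] := hcls i0.
  have hsc := hS T (subsetDl _ _) Xc oXc hmax.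
  have hbb := hB Xc oXc.
  move: hsc hbb; rewrite !payS_E /budS (split_set cl P) [X in _ = X](split_set cl P) => hsc hbb.
  have hge : \sum_(i in cl :&: P) bud M i <= \sum_(i in cl :&: P) pay_i i Xc p.
    rewrite /T in hsc; lra.
  have conv : \sum_(i in P :&: cl) (del i - delay_i M Xc i) =
     (\sum_(i in cl :&: P) pay_i i Xc p - \sum_(i in cl :&: P) bud M i) / lam i0.
    rewrite setIC -sumrB mulr_suml; apply: eq_bigr => i; rewrite !inE => /andP[/eqP hi _].
    have hc := csX Xc oXc i.
    have hl : lam i != 0 by rewrite gt_eqF.
    have -> : delay_i M Xc i = (beta i - pay_i i Xc p) / lam i.
      by rewrite -hc mulrAC mulfV // mul1r.
    rewrite /del -hi; field.
    exact: hl.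
  rewrite conv; apply: divr_ge0; first by rewrite subr_ge0.
  exact: hlam0.
have [X hX hXd] : exists2 X, LP_feasible M X & forall i, delay_i M X i <= del i.
  case: (classic (exists2 X, LP_feasible M X & forall i, delay_i M X i <= del i)) => // hno.
  exfalso.
  have hF : forall X, LP_feasible M X -> exists e,
      del e < \sum_i (if e == i then 1 else 0) * delay_i M X i.
    move=> X hX; case: (boolP [forall i, delay_i M X i <= del i]) => [/forallP h|].
      by exfalso; apply: hno; exists X.
    rewrite negb_forall => /existsP[e he]; exists e.
    rewrite (eq_bigr (fun i => if e == i then delay_i M X i else 0)) ?sum_if_r.
      by rewrite ltNge.
    by move=> i _; case: eqP; rewrite ?mul1r ?mul0r.
  have [w [hw [al' [pp' [hf hlt]]]]] :=
    @primal_farkas R A G C M A (fun e i => if e == i then 1 else 0) del hF.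
  have ew : forall i, \sum_e w e * (if e == i then 1 else 0) = w i.
    move=> i; rewrite (eq_bigr (fun e => if e == i then w e else 0)) ?sum_if //.
    by move=> e _; case: eqP; rewrite ?mulr1 ?mulr0.
  have {}hf := DLP_ext ew hf.
  have [Xw [hXwT hXwc]] := chain hext w.
  have hg : \sum_i w i * delay_i M Xw i <= \sum_i w i * del i.
    rewrite -subr_ge0 -sumrB -eT.
    have -> : \sum_(i in [set: A]) (w i * del i - w i * delay_i M Xw i) =
              \sum_(i in [set: A]) w i * (del i - delay_i M Xw i).
      by apply: eq_bigr => i _; rewrite mulrBr.
    apply: (abel_ge (leqnn _)) => [i _ | j _]; first exact: hw.
    rewrite sumrB subr_ge0 delayS_lev.
    have [Y [hY hYd]] := core [set i | w j <= w i].
    apply: le_trans ((proj2 (hXwc (w j))) Y hY) _.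
    apply: le_trans hYd _; rewrite le_eqVlt; apply/orP; left; apply/eqP.
    by apply: eq_bigl => i; rewrite !inE.
  have := weak (JO_LP hXwT) hf; rewrite /LP_obj.
  move: hlt hg; rewrite /delay_i => h1 h2 h3.
  lra.
have e1 : LP_obj M lam X1 = \sum_i (beta i - bud M i).
  rewrite /LP_obj (eq_bigr (fun i => beta i - pay_i i X1 p)); last first.
    by move=> i _; exact: csX.
  by rewrite !sumrB sumpay.
have oX : LP_optimal M lam X.
  split => // Y hY; apply: le_trans (proj2 oX1 Y hY); rewrite e1 /LP_obj.
  apply: ler_sum => i _.
  have -> : beta i - bud M i = lam i * del i.
    by rewrite /del mulrC divfK // gt_eqF.
  by apply: ler_wpM2l => //; exact: hXd.
exists X; split => //.
have hge : forall i, bud M i <= pay_i i X p.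
  move=> i; have := csX X oX i; have := hXd i.
  have -> : bud M i = beta i - lam i * del i.
    by rewrite /del mulrC divfK ?gt_eqF //; ring.
  move=> h1 h2.
  have : lam i * delay_i M X i <= lam i * del i by apply: ler_wpM2l.
  lra.
have hs : \sum_i (pay_i i X p - bud M i) = 0 by rewrite sumrB sumpay // subrr.
move=> i; apply/eqP; rewrite -subr_eq0; apply/eqP.
by apply: (psumr_eq0P _ hs) => // j _; rewrite subr_ge0.
Qed.

End Main.

End Aux.

Theorem lemma4p3 (R : realFieldType) (A G C : finType) (M : market R A G C)
  (hr : forall i k, 0 <= req M i k)
  (hd : forall i j, 0 <= dly M i j)
  (hm : forall i, 0 < bud M i)
  (hext : extensibility M)
  (lam : A -> R) (p : G -> R)
  (hlam : forall i, 0 < lam i)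
  (hp : forall j, 0 <= p j)
  (hprop : proper_pair M lam p) :
  exists X : alloc R A G, LP_optimal M lam X /\ forall i : A, pay_i i X p = bud M i.
Proof.
exact: (Aux.main hr hd hm hext hlam hp hprop).
Qed.
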